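(* Let $n\geq 2$. Identify $H^\ast(BSO(2n-1))$ with the subring $\mathbb{Z}/2[\widehat{\omega_2},\dots,\widehat{\omega_{2n-1}}]$ of $H^\ast(BSO(2n))=\mathbb{Z}/2[\widehat{\omega_2},\dots,\widehat{\omega_{2n}}]$, so that $H^\ast(BSO(2n))\cong\bigoplus_{k\ge0}H^\ast(BSO(2n-1))\,\widehat{\omega_{2n}}^{k}$. Then for every $k\geq1$, $H^\ast(BSO(2n-1))\,\widehat{\omega_{2n}}^{k}$ is an $E$-submodule of $\tilde{H}^\ast(BSO(2n))$, and $\tilde{H}^\ast(BSO(2n-1))$ is an $E$-submodule of $\tilde{H}^\ast(BSO(2n))$.
   Context: Cohomology is with $\mathbb{Z}/2$ coefficients; $\widehat{\omega_i}$ denotes the $i$-th Stiefel–Whitney class. $E=\mathbb{Z}/2\langle Q_0,Q_1\rangle$ is the exterior subalgebra of the mod 2 Steenrod algebra generated by the Milnor primitives $Q_0=Sq^1$ and $Q_1=Sq^3+Sq^2Sq^1$, acting on cohomology via Steenrod operations. *)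

(* Defs.v *)
From HB Require Import structures.
From mathcomp Require Import all_boot all_order all_algebra.
From mathcomp Require Import mpoly.
Set Implicit Arguments. Unset Strict Implicit. Unset Printing Implicit Defensive.
Import GRing.Theory.
Local Open Scope ring_scope.

(* Algebraic model of H^*(BSO(N); Z/2) = Z/2[w_2, ..., w_N]:
   the polynomial ring over 'F_2 in N-1 variables, variable i standing for
   the Stiefel-Whitney class w_(i+2). *)
Definition HBSO (N : nat) := {mpoly 'F_2[N.-1]}.

Definition sw (N k : nat) : HBSO N :=
  if k == 0%N then 1 else
  if (2 <= k)%N then
    match (insub (k - 2)%N : option 'I_(N.-1)) with
    | Some i => 'X_i
    | None => 0
    end
  else 0.

(* Wu formula: Sq^a(w_j) = sum_{t=0}^{a} C(j-a+t-1, t) w_(a-t) w_(j+t)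
   for a <= j, and Sq^a(w_j) = 0 for a > j. *)
Definition wu (N a j : nat) : HBSO N :=
  if (a <= j)%N then
    \sum_(t < a.+1) ('C(j - a + t - 1, t))%:R * sw N (a - t) * sw N (j + t)
  else 0.

(* Total Steenrod square Sq_t = sum_a t^a Sq^a, the ring homomorphism
   determined (Cartan formula) by its values on the generators w_j. *)
Definition totSq (N : nat) (p : HBSO N) : {poly HBSO N} :=
  mmap (fun c : 'F_2 => (c%:MP)%:P)
       (fun i : 'I_(N.-1) => \sum_(a < (i + 2).+1) 'X^a * (wu N a (i + 2))%:P) p.

Definition Sq (N a : nat) (p : HBSO N) : HBSO N := (totSq p)`_a.

Definition Q0 (N : nat) (p : HBSO N) : HBSO N := Sq 1 p.
Definition Q1 (N : nat) (p : HBSO N) : HBSO N := Sq 3 p + Sq 2 (Sq 1 p).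

Definition reduced (N : nat) (p : HBSO N) : Prop := p@_0%MM = 0.

(* S is an E-submodule of the reduced cohomology H~^*(BSO(N)), E = <Q0,Q1>
   over Z/2 (closure under 0, +, Q0, Q1; scalars in Z/2 are then automatic). *)
Definition E_submodule_reduced (N : nat) (S : HBSO N -> Prop) : Prop :=
  (forall x, S x -> reduced x) /\
  S 0 /\ (forall x y, S x -> S y -> S (x + y)) /\
  (forall x, S x -> S (Q0 x)) /\ (forall x, S x -> S (Q1 x)).

Definition incl (M N : nat) (p : HBSO M) : HBSO N :=
  mmap (fun c : 'F_2 => c%:MP) (fun i : 'I_(M.-1) => sw N (i + 2)) p.

(* Main.v *)
Require Import Defs.
From HB Require Import structures.
From mathcomp Require Import all_boot all_order all_algebra.
From mathcomp Require Import mpoly.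
From mathcomp Require Import zify ring.
Set Implicit Arguments. Unset Strict Implicit. Unset Printing Implicit Defensive.
Import GRing.Theory.
Local Open Scope ring_scope.

Lemma mpoly_closure k (P : {mpoly 'F_2[k]} -> Prop) :
  (forall c, P c%:MP) -> (forall i, P 'X_i) ->
  (forall p q, P p -> P q -> P (p + q)) ->
  (forall p q, P p -> P q -> P (p * q)) -> forall p, P p.
Proof.
move=> hC hX hD hM p; elim/mpolyind: p => [|c m p _ _ hp].
  by rewrite -mpolyC0; apply: (hC).
apply: (hD) => //; rewrite -mul_mpolyC; apply: (hM) => //.
rewrite mpolyXE_id; apply: (big_ind P).
- by rewrite -mpolyC1; apply: (hC).
- exact: hM.
move=> i _; elim: (m i) => [|e ih]; first by rewrite expr0 -mpolyC1; apply: (hC).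
by rewrite exprS; apply: (hM).
Qed.

Section Gen.
Variable N : nat.
Implicit Types p q x y : HBSO N.

Lemma char2 x : x + x = 0.
Proof.
rewrite -mulr2n -scaler_nat.
by rewrite (_ : 2%:R = 0) ?scale0r //; apply/eqP.
Qed.

Lemma Mn_odd x k : x *+ k = if odd k then x else 0.
Proof.
elim: k => [|k ih]; first by rewrite mulr0n.
by rewrite mulrS ih /=; case: (odd k); rewrite ?char2 ?addr0.
Qed.

Lemma totSqM p q : totSq (p * q) = totSq p * totSq q.
Proof.
exact: (@mmap_is_multiplicative _ _ _ _ (polyC \o (@mpolyC _ _))).1.
Qed.

Lemma totSqD p q : totSq (p + q) = totSq p + totSq q.
Proof. exact: (@mmapD _ _ _ _ (polyC \o (@mpolyC _ _))). Qed.

Lemma totSqC c : totSq (c%:MP : HBSO N) = (c%:MP)%:P.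
Proof. exact: (@mmapC _ _ _ _ (polyC \o (@mpolyC _ _))). Qed.

Lemma totSqX (i : 'I_N.-1) : totSq ('X_i : HBSO N) =
  \sum_(a < (i + 2).+1) 'X^a * (wu N a (i + 2))%:P.
Proof. by rewrite /totSq (@mmapX _ _ _ _ (polyC \o (@mpolyC _ _))) mmap1U. Qed.


Lemma SqD a p q : Sq a (p + q) = Sq a p + Sq a q.
Proof. by rewrite /Sq totSqD coefD. Qed.

Lemma Sq_0 a : Sq a (0 : HBSO N) = 0.
Proof. by rewrite -mpolyC0 /Sq totSqC coefC; case: eqP => // _; rewrite mpolyC0. Qed.

Lemma SqMn a p k : Sq a (p *+ k) = Sq a p *+ k.
Proof. by elim: k => [|k ih]; rewrite ?mulr0n ?Sq_0 // !mulrS SqD ih. Qed.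

Lemma SqM a p q : Sq a (p * q) = \sum_(i < a.+1) Sq i p * Sq (a - i) q.
Proof. by rewrite /Sq totSqM coefM. Qed.

Lemma SqC a c : Sq a (c%:MP : HBSO N) = if a == 0%N then c%:MP else 0.
Proof. by rewrite /Sq totSqC coefC. Qed.

Lemma SqX a (i : 'I_N.-1) : Sq a ('X_i : HBSO N) = if (a <= i + 2)%N then wu N a (i + 2) else 0.
Proof.
rewrite /Sq totSqX.
rewrite (eq_bigr (fun a : 'I_(i+2).+1 => (wu N a (i + 2)) *: 'X^a)); last first.
  by move=> j _; rewrite mulrC mul_polyC.
by rewrite -(poly_def (i + 2).+1 (fun a => wu N a (i + 2))) coef_poly ltnS.
Qed.

Lemma sw_X (i : 'I_N.-1) : sw N (i + 2) = 'X_i.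
Proof.
rewrite /sw addn2 /= subn2 /=.
by rewrite valK.
Qed.

Lemma Sq0 p : Sq 0 p = p.
Proof.
elim/mpoly_closure: p.
- by move=> c; rewrite SqC.
- move=> i; rewrite SqX /wu /= big_ord_recr big_ord0 /= add0r.
  by rewrite bin0 subnn addn0 sw_X /sw /= !mul1r.
- by move=> p q hp hq; rewrite SqD hp hq.
- by move=> p q hp hq; rewrite SqM big_ord_recr big_ord0 /= add0r hp hq.
Qed.


Lemma sw1 : sw N 1 = 0. Proof. by []. Qed.
Lemma sw0 : sw N 0 = 1. Proof. by []. Qed.

Lemma sw_big m : (N.-1 + 2 <= m)%N -> sw N m = 0.
Proof.
move=> h; rewrite /sw; case: eqP => [e|_]; first by move: h; rewrite e; lia.
case: ifP => // _; rewrite insubF //; apply/negbTE; rewrite -leqNgt; lia.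
Qed.

Lemma wu1 m : (1 <= m)%N -> wu N 1 m = sw N (m + 1) *+ (m - 1).
Proof.
move=> h; rewrite /wu h !big_ord_recr big_ord0 /= add0r.
rewrite sw1 mulr0 mul0r add0r sw0 mulr1 bin1 mulr_natl.
by congr (_ *+ _); lia.
Qed.

Lemma wu2 m : (2 <= m)%N -> wu N 2 m = sw N 2 * sw N m + sw N (m + 2) *+ 'C(m - 1, 2).
Proof.
move=> h; rewrite /wu h !big_ord_recr big_ord0 /= add0r.
rewrite sw1 mulr0 mul0r addr0 sw0 mulr1 bin0 mul1r addn0 mulr_natl.
by congr (_ + _ *+ 'C(_, _)); lia.
Qed.

Lemma wu3 m : (3 <= m)%N -> wu N 3 m =
  sw N 3 * sw N m + (sw N 2 * sw N (m + 1)) *+ (m - 3) + sw N (m + 3) *+ 'C(m - 1, 3).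
Proof.
move=> h; rewrite /wu h !big_ord_recr big_ord0 /= add0r.
rewrite sw1 mulr0 mul0r addr0 sw0 mulr1 bin0 mul1r addn0 bin1 !mulr_natl -mulrnAl.
have -> : (m - 3 + 1 - 1 = m - 3)%N by lia.
by have -> : (m - 3 + 3 - 1 = m - 1)%N by lia.
Qed.

Lemma Sq_sw a m : (2 <= m)%N -> Sq a (sw N m) = if (a <= m)%N then wu N a m else 0.
Proof.
move=> h2; case: (ltnP (m - 2) N.-1) => hm.
  have -> : m = (nat_of_ord (Ordinal hm) + 2)%N by rewrite /= subnK.
  by rewrite sw_X SqX.
rewrite sw_big; last by lia.
rewrite Sq_0; case: ifP => // ha; rewrite /wu ha big1 // => t _.
by rewrite (sw_big (m := m + t)) ?mulr0 //; lia.
Qed.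


End Gen.

Definition sqL N := locked (@Sq N).
Lemma sqE N : @Sq N = @sqL N. Proof. by rewrite /sqL -lock. Qed.

Section Gen2.
Variable N : nat.
Implicit Types p q x y : HBSO N.
Local Notation sq := (@sqL N).

Lemma sqD a p q : sq a (p + q) = sq a p + sq a q.
Proof. by rewrite -sqE SqD. Qed.
Lemma sq_0 a : sq a 0 = 0.
Proof. by rewrite -sqE Sq_0. Qed.
Lemma sqMn a p k : sq a (p *+ k) = sq a p *+ k.
Proof. by rewrite -sqE SqMn. Qed.
Lemma sqM a p q : sq a (p * q) = \sum_(i < a.+1) sq i p * sq (a - i) q.
Proof. by rewrite -sqE SqM. Qed.
Lemma sqC a c : sq a (c%:MP : HBSO N) = if a == 0%N then c%:MP else 0.
Proof. by rewrite -sqE SqC. Qed.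
Lemma sq0 p : sq 0 p = p.
Proof. by rewrite -sqE Sq0. Qed.
Lemma sq_sw a m : (2 <= m)%N -> sq a (sw N m) = if (a <= m)%N then wu N a m else 0.
Proof. by rewrite -sqE; apply: Sq_sw. Qed.

Lemma sq1M p q : sq 1 (p * q) = sq 1 p * q + p * sq 1 q.
Proof. by rewrite sqM !big_ord_recr big_ord0 /= add0r !sq0 addrC. Qed.

Lemma sq11 p : sq 1 (sq 1 p) = 0.
Proof.
elim/mpoly_closure: p.
- by move=> c; rewrite sqC sq_0.
- move=> i; rewrite -sw_X sq_sw; last by lia.
  rewrite ifT; last by lia.
  rewrite wu1; last by lia.
  rewrite sqMn sq_sw; last by lia.
  have h3 : (0 < i + 2 + 1)%N by lia.
  rewrite h3 wu1; last by lia.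
  rewrite -mulrnA Mn_odd oddM.
  have -> : (i + 2 + 1 - 1 = i.+2)%N by lia.
  have -> : (i + 2 - 1 = i.+1)%N by lia.
  by have -> : odd i.+2 && odd i.+1 = false by rewrite /= negbK; case: (odd i).
- by move=> p q hp hq; rewrite !sqD hp hq addr0.
- move=> p q hp hq; rewrite !sq1M !sqD !sq1M hp hq mul0r mulr0 add0r addr0.
  by rewrite addrC char2.
Qed.

Lemma Q0E p : Q0 p = sq 1 p. Proof. by rewrite /Q0 sqE. Qed.
Lemma Q1E p : Q1 p = sq 3 p + sq 2 (sq 1 p). Proof. by rewrite /Q1 sqE. Qed.

Lemma Q1M p q : Q1 (p * q) = Q1 p * q + p * Q1 q.
Proof.
rewrite !Q1E sq1M sqD !sqM !big_ord_recr big_ord0 /= !add0r !sq0 !sq11 !mul0r !mulr0 !addr0.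
rewrite !big_ord0 !add0r !subn0 (_ : (3 - 1 = 2)%N) // (_ : (3 - 2 = 1)%N) //.
set a1 := sq 1 p; set a2 := sq 2 p; set a3 := sq 3 p; set b1 := sq 1 q; set b2 := sq 2 q.
set b3 := sq 3 q; set c := sq 2 a1; set d := sq 2 b1.
rewrite -[RHS]addr0 -{1}(char2 (a1 * b2)) -[RHS]addr0 -{1}(char2 (a2 * b1)).
ring.
Qed.

End Gen2.

Lemma bin3_even k : ~~ odd 'C(k.*2, 3).
Proof.
have h := bin_ffact k.*2 3.
rewrite !ffactnS ffactn0 /= in h.
have e : (k.*2 * ((k.*2).-1 * ((k.*2).-2 * 1)) = 4 * (k * (k.*2).-1 * k.-1))%N.
  case: k {h} => [|k] //=; rewrite !doubleS /=. rewrite -!addnn. nia.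
rewrite e (_ : 3`! = 6)%N // in h.
apply/negP => ho; have h2 : ('C(k.*2, 3) %% 2 = 1)%N by rewrite modn2 ho.
lia.
Qed.

Section Main.
Variable n : nat.
Hypothesis hn : (2 <= n)%N.
Local Notation N := (2 * n)%N.
Local Notation M := (2 * n - 1)%N.
Local Notation sq := (@sqL N).

Definition Sub (x : HBSO N) := exists p : HBSO M, x = incl N p.

Lemma inclD (p q : HBSO M) : incl N (p + q) = incl N p + incl N q.
Proof. exact: (@mmapD _ _ _ _ (@mpolyC _ _)). Qed.
Lemma inclMn (p : HBSO M) k : incl N (p *+ k) = incl N p *+ k.
Proof. exact: (@mmapMn _ _ _ _ (@mpolyC _ _)). Qed.
Lemma inclM (p q : HBSO M) : incl N (p * q) = incl N p * incl N q.
Proof. exact: (@mmap_is_multiplicative _ _ _ _ (@mpolyC _ _)).1. Qed.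
Lemma inclC c : incl N (c%:MP : HBSO M) = c%:MP.
Proof. exact: (@mmapC _ _ _ _ (@mpolyC _ _)). Qed.
Lemma inclX (i : 'I_M.-1) : incl N ('X_i : HBSO M) = sw N (i + 2).
Proof. by rewrite /incl (@mmapX _ _ _ _ (@mpolyC _ _)) mmap1U. Qed.
Lemma incl0 : incl N (0 : HBSO M) = 0.
Proof. by rewrite -mpolyC0 inclC. Qed.
Lemma incl1 : incl N (1 : HBSO M) = 1.
Proof. by rewrite -mpolyC1 inclC. Qed.

Lemma Sub0 : Sub 0. Proof. by exists 0; rewrite incl0. Qed.
Lemma SubD x y : Sub x -> Sub y -> Sub (x + y).
Proof. by move=> [p ->] [q ->]; exists (p + q); rewrite inclD. Qed.
Lemma SubM x y : Sub x -> Sub y -> Sub (x * y).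
Proof. by move=> [p ->] [q ->]; exists (p * q); rewrite inclM. Qed.
Lemma SubMn x k : Sub x -> Sub (x *+ k).
Proof. by move=> [p ->]; exists (p *+ k); rewrite inclMn. Qed.
Lemma Sub1 : Sub 1. Proof. by exists 1; rewrite incl1. Qed.

Lemma Sub_sw m : (m <= M)%N -> Sub (sw N m).
Proof.
move=> hm.
case: m hm => [|[|m]] hm; first exact: Sub1; first exact: Sub0.
have hi : (m < M.-1)%N by lia.
exists ('X_(Ordinal hi)); rewrite inclX /=; congr sw; lia.
Qed.

Lemma SubXsw x m k : Sub x -> (m != N) || ~~ odd k -> Sub ((x * sw N m) *+ k).
Proof.
move=> hx hk.
case: (ltnP M m) => hm; last by apply: SubMn; apply: SubM => //; apply: Sub_sw.
case: (eqVneq m N) hk => [-> /= hk|ne _].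
  by rewrite Mn_odd (negbTE hk); exact: Sub0.
rewrite sw_big; last by lia.
by rewrite mulr0 mul0rn; exact: Sub0.
Qed.



End Main.
Lemma mc0M k (x y : HBSO k) : (x * y)@_0 = x@_0 * y@_0.
Proof. exact: (mcoeff0_is_multiplicative _ _).1. Qed.

Lemma redD k (x y : HBSO k) : reduced x -> reduced y -> reduced (x + y).
Proof. by rewrite /reduced mcoeffD => -> ->; rewrite addr0. Qed.
Lemma redMl k (x y : HBSO k) : reduced x -> reduced (x * y).
Proof. by rewrite /reduced mc0M => ->; rewrite mul0r. Qed.
Lemma redMr k (x y : HBSO k) : reduced y -> reduced (x * y).
Proof. by rewrite /reduced mc0M => ->; rewrite mulr0. Qed.
Lemma redMn k (x : HBSO k) j : reduced x -> reduced (x *+ j).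
Proof. by rewrite /reduced mcoeffMn => ->; rewrite mul0rn. Qed.
Lemma red0 k : reduced (0 : HBSO k).
Proof. by rewrite /reduced mcoeff0. Qed.
Lemma redX k (i : 'I_k.-1) : reduced ('X_i : HBSO k).
Proof. by rewrite /reduced mcoeffX mnm1_eq0. Qed.

Lemma red_sw K m : (2 <= m)%N -> reduced (sw K m).
Proof.
move=> h; case: (ltnP (m - 2) K.-1) => hm.
  have -> : m = (nat_of_ord (Ordinal hm) + 2)%N by rewrite /= subnK.
  by rewrite sw_X; apply: redX.
by rewrite sw_big; [apply: red0 | lia].
Qed.

Definition isDer K (D : HBSO K -> HBSO K) :=
  [/\ forall x y, D (x + y) = D x + D y,
      forall x y, D (x * y) = D x * y + x * D y &
      forall c, D c%:MP = 0].

Lemma Q0der K : isDer (@Q0 K).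
Proof.
split => [x y|x y|c]; rewrite !Q0E ?sqD ?sq1M //.
by rewrite sqC.
Qed.

Lemma Q1der K : isDer (@Q1 K).
Proof.
split => [x y|x y|c]; first by rewrite !Q1E !sqD -!addrA; congr (_ + _); rewrite addrCA.
  exact: Q1M.
by rewrite Q1E !sqC /= addr0.
Qed.

Lemma der_red K D : isDer D -> (forall m, (2 <= m)%N -> reduced (D (sw K m))) ->
  forall x, reduced (D x).
Proof.
move=> [hD hM hC] hsw; elim/mpoly_closure.
- by move=> c; rewrite hC; apply: red0.
- by move=> i; rewrite -sw_X; apply: hsw; lia.
- by move=> p q hp hq; rewrite hD; apply: redD.
- by move=> p q hp hq; rewrite hM; apply: redD; [apply: redMl | apply: redMr].
Qed.

Lemma der_pow K D (w z : HBSO K) : isDer D -> D w = z * w -> forall k, D (w ^+ k) = (z *+ k) * w ^+ k.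
Proof.
move=> [hD hM hC] hw; elim => [|k ih].
  by rewrite expr0 -mpolyC1 hC mulr0n mul0r.
rewrite exprSr hM ih hw mulrSr; set u := z *+ k; ring.
Qed.

Section Main1.
Variable n : nat.
Hypothesis hn : (2 <= n)%N.
Local Notation N := (2 * n)%N.
Local Notation M := (2 * n - 1)%N.
Local Notation sq := (@sqL N).

Lemma der_sub D : isDer D -> (forall m, (2 <= m <= M)%N -> Sub (D (sw N m))) ->
  forall p : HBSO M, Sub (D (incl N p)).
Proof.
move=> [hD hM hC] hsw; elim/mpoly_closure.
- by move=> c; rewrite inclC hC; apply: Sub0.
- by move=> i; rewrite inclX; apply: hsw; have := ltn_ord i; lia.
- by move=> p q hp hq; rewrite inclD hD; apply: SubD.
- move=> p q hp hq; rewrite inclM hM; apply: SubD; apply: SubM => //; by eexists.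
Qed.

End Main1.

Lemma Q0sw K m : (2 <= m)%N -> Q0 (sw K m) = sw K (m + 1) *+ (m - 1).
Proof.
move=> h; rewrite Q0E sq_sw // ifT; last by lia.
by rewrite wu1 //; lia.
Qed.

Lemma Q1sw K m : (2 <= m)%N -> Q1 (sw K m) =
  (if (3 <= m)%N then sw K 3 * sw K m + (sw K 2 * sw K (m + 1)) *+ (m - 3)
       + (1 * sw K (m + 3)) *+ 'C(m - 1, 3) else 0)
  + (sw K 2 * sw K (m + 1)) *+ (m - 1) + (1 * sw K (m + 3)) *+ ('C(m, 2) * (m - 1)).
Proof.
move=> h; rewrite Q1E (sq_sw _ 3 h) (sq_sw _ 1 h).
have h1 : (1 <= m)%N by lia.
rewrite h1 wu1 // sqMn sq_sw; last by lia.
have h2 : (2 <= m + 1)%N by lia.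
rewrite h2 wu2 //.
rewrite mulrnDl -mulrnA mul1r addrA.
have -> : (m + 1 + 2 = m + 3)%N by lia.
have -> : (m + 1 - 1 = m)%N by lia.
case: ifP => h3 //.
by rewrite wu3 // mul1r.
Qed.

Lemma red_Q0 K (x : HBSO K) : reduced (Q0 x).
Proof.
apply: (der_red (Q0der K)) => m hm.
by rewrite Q0sw //; apply: redMn; apply: red_sw; lia.
Qed.

Lemma red_Q1 K (x : HBSO K) : reduced (Q1 x).
Proof.
have rt m' k (y : HBSO K) : (2 <= m')%N -> reduced ((y * sw K m') *+ k).
  by move=> h; apply: redMn; apply: redMr; apply: red_sw.
apply: (der_red (Q1der K)) => m hm.
rewrite Q1sw //; apply: redD; [apply: redD|]; try (apply: rt; lia).
case: ifP => _; last exact: red0.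
apply: redD; [apply: redD|]; try (apply: rt; lia).
by apply: redMr; apply: red_sw.
Qed.

Lemma even_ok a b : (a = b.*2)%N -> ~~ odd a.
Proof. by move->; rewrite odd_double. Qed.

Section Main2.
Variable n : nat.
Hypothesis hn : (2 <= n)%N.
Local Notation N := (2 * n)%N.
Local Notation M := (2 * n - 1)%N.

Lemma Sub_Q0sw m : (2 <= m <= M)%N -> Sub (Q0 (sw N m)).
Proof.
move=> /andP [h1 h2]; rewrite Q0sw // -[sw N (m + 1)]mul1r.
apply: (SubXsw hn); first exact: Sub1.
case: (eqVneq (m + 1)%N N) => [e|ne]; last by [].
by apply/orP; right; apply: (@even_ok _ (n - 1)); lia.
Qed.

Lemma Sub_Q1sw m : (2 <= m <= M)%N -> Sub (Q1 (sw N m)).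
Proof.
move=> /andP [h1 h2].
have S2 : Sub (sw N 2) by apply: Sub_sw; lia.
have S3 : Sub (sw N 3) by apply: Sub_sw; lia.
rewrite Q1sw //; apply: SubD; [apply: SubD|]; last first.
- apply: (SubXsw hn); first exact: Sub1.
  case: (eqVneq (m + 3)%N N) => [e|ne]; last by [].
  apply/orP; right; rewrite oddM negb_and; apply/orP; right.
  by apply: (@even_ok _ (n - 2)); lia.
- apply: (SubXsw hn) => //.
  case: (eqVneq (m + 1)%N N) => [e|ne]; last by [].
  by apply/orP; right; apply: (@even_ok _ (n - 1)); lia.
case: ifP => _; last exact: Sub0.
apply: SubD; [apply: SubD|].
- by apply: SubM => //; apply: Sub_sw.
- apply: (SubXsw hn) => //.
  case: (eqVneq (m + 1)%N N) => [e|ne]; last by [].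
  by apply/orP; right; apply: (@even_ok _ (n - 2)); lia.
- apply: (SubXsw hn); first exact: Sub1.
  case: (eqVneq (m + 3)%N N) => [e|ne]; last by [].
  apply/orP; right.
  have -> : (m - 1 = (n - 2).*2)%N by lia.
  exact: bin3_even.
Qed.

Lemma Q0w : Q0 (sw N N) = 0 * sw N N.
Proof. by rewrite Q0sw; [rewrite sw_big ?mul0rn ?mul0r //; lia | lia]. Qed.

Lemma Q1w : Q1 (sw N N) = sw N 3 * sw N N.
Proof.
rewrite Q1sw; last by lia.
rewrite ifT; last by lia.
rewrite (@sw_big N (N + 1)); last by lia.
rewrite (@sw_big N (N + 3)); last by lia.
by rewrite !mulr0 !mul0rn !addr0.
Qed.


Lemma incl_c0 (p : HBSO M) : (incl N p)@_0 = p@_0.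
Proof.
elim/mpoly_closure: p.
- by move=> c; rewrite inclC !mcoeffC !eqxx.
- move=> i; rewrite inclX (redX i) red_sw //; lia.
- move=> p q hp hq; rewrite inclD !mcoeffD; congr (_ + _); [exact: hp | exact: hq].
- move=> p q hp hq; rewrite inclM !mc0M; congr (_ * _); [exact: hp | exact: hq].
Qed.

Lemma Sk_der D z : isDer D -> (forall p : HBSO M, Sub (D (incl N p))) -> Sub z ->
  D (sw N N) = z * sw N N ->
  forall (p : HBSO M) k, exists q : HBSO M, D (incl N p * sw N N ^+ k) = incl N q * sw N N ^+ k.
Proof.
move=> hd hs [r ->] hw p k; have [hD hM hC] := hd.
rewrite hM (der_pow hd hw).
have [q hq] := hs p.
rewrite hq.
exists (q + p * (r *+ k)). rewrite inclD inclM inclMn.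
move: (incl N q) (incl N p) (incl N r *+ k) (sw N N ^+ k) => a b c d.
by rewrite mulrDl mulrA.
Qed.

End Main2.

Lemma mc0X K (x : HBSO K) k : (x ^+ k)@_0 = x@_0 ^+ k.
Proof.
elim: k => [|k ih]; first by rewrite !expr0 mcoeff1 eqxx.
by rewrite !exprS mc0M; congr (_ * _).
Qed.

Unset Implicit Arguments.
Theorem lemma1 (n : nat) (hn : (2 <= n)%N) :
  (forall k : nat, (1 <= k)%N ->
     E_submodule_reduced
       (fun x : HBSO (2 * n) =>
          exists p : HBSO (2 * n - 1), x = incl (2 * n) p * sw (2 * n) (2 * n) ^+ k))
  /\
  E_submodule_reduced
    (fun x : HBSO (2 * n) =>
       exists p : HBSO (2 * n - 1), reduced p /\ x = incl (2 * n) p).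
Proof.
split.
- move=> k hk; split; [|split; [|split; [|split]]].
  + move=> x [p ->]; rewrite /reduced mc0M mc0X (@red_sw (2 * n)%N (2 * n)%N); last by lia.
    by rewrite expr0n; case: k hk => // k _; rewrite mulr0.
  + by exists 0; rewrite incl0 mul0r.
  + by move=> x y [p ->] [q ->]; exists (p + q); rewrite inclD mulrDl.
  + move=> x [p ->].
    apply: (Sk_der (z := 0) (Q0der _)) => //; last by rewrite Q0w.
    * by move=> q; apply: der_sub => //; [exact: Q0der | move=> m hm; exact: Sub_Q0sw].
    * exact: Sub0.
  + move=> x [p ->].
    apply: (Sk_der (z := sw (2 * n) 3) (Q1der _)) => //; last by rewrite Q1w.
    * by move=> q; apply: der_sub => //; [exact: Q1der | move=> m hm; exact: Sub_Q1sw].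
    * by apply: Sub_sw; lia.
- split; [|split; [|split; [|split]]].
  + by move=> x [p [hp ->]]; rewrite /reduced incl_c0.
  + by exists 0; split; [exact: red0 | rewrite incl0].
  + move=> x y [p [hp ->]] [q [hq ->]]; exists (p + q); split; last by rewrite inclD.
    exact: redD.
  + move=> x [p [hp ->]].
    have [q hq] : Sub (Q0 (incl (2 * n) p)).
      by apply: der_sub => //; [exact: Q0der | move=> m hm; exact: Sub_Q0sw].
    exists q; split => //; have h := red_Q0 (incl (2 * n) p); rewrite hq in h.
    exact: (etrans (esym (incl_c0 hn q)) h).
  + move=> x [p [hp ->]].
    have [q hq] : Sub (Q1 (incl (2 * n) p)).
      by apply: der_sub => //; [exact: Q1der | move=> m hm; exact: Sub_Q1sw].
    exists q; split => //; have h := red_Q1 (incl (2 * n) p); rewrite hq in h.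
    exact: (etrans (esym (incl_c0 hn q)) h).
Qed.
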